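(* Let $G$ be a torsion-free group, $\mathbb{F}$ a field, $\alpha$ a zero divisor in $\mathbb{F}[G]$ with $|supp(\alpha)|=4$ and $|S_\alpha|=12$, and let $\beta$ be a non-zero element of $\mathbb{F}[G]$ with $\alpha\beta=0$. Then $Z(\alpha,\beta)$ is the induced subgraph on the vertex set $supp(\beta)$ of the Cayley graph of $G$ with respect to $S_\alpha$.
   Context: $supp(\gamma)=\{x\in G:\gamma_x\ne0\}$; $S_\alpha=\{h^{-1}h':h\ne h',\ h,h'\in supp(\alpha)\}$. The zero-divisor graph $Z(\alpha,\beta)$ is the multigraph with vertex set $supp(\beta)$ whose edges are the sets $\{(h,h',g,g'),(h',h,g',g)\}$ with $h,h'\in supp(\alpha)$, $g,g'\in supp(\beta)$, $g\ne g'$, $hg=h'g'$, each joining $g$ and $g'$. The Cayley graph of $G$ with respect to an inverse-closed $S\not\ni1$ is the simple graph on $G$ in which $x,y$ are adjacent iff $xy^{-1}\in S$. *)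

(* Defs.v *)
From HB Require Import structures.
From mathcomp Require Import all_boot all_algebra finmap.
From mathcomp Require Import monoid.
Set Implicit Arguments. Unset Strict Implicit. Unset Printing Implicit Defensive.
Import GRing.Theory.
Local Open Scope fset_scope.

Notation groupAlg G F := {fsfun G -> F with 0%R}.

Section Defs.
Variables (G : groupType) (F : fieldType).

Definition torsion_free : Prop :=
  forall (x : G) (n : nat), (0 < n)%N -> (x ^+ n)%g = 1%g -> x = 1%g.

Definition supp (a : groupAlg G F) : {fset G} := finsupp a.

Definition galg_mul_coef (a b : groupAlg G F) (x : G) : F :=
  (\sum_(h <- supp a) a h * b (h^-1 * x)%g)%R.

Definition galg_mul_zero (a b : groupAlg G F) : Prop :=
  forall x : G, galg_mul_coef a b x = 0%R.

Definition galg_nonzero (a : groupAlg G F) : Prop := exists x : G, a x != 0%R.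

Definition zero_divisor (a : groupAlg G F) : Prop :=
  galg_nonzero a /\
  exists b : groupAlg G F, galg_nonzero b /\ (galg_mul_zero a b \/ galg_mul_zero b a).

Definition S_of (a : groupAlg G F) : {fset G} :=
  [fset (h^-1 * h')%g | h in supp a, h' in supp a & h != h'].

(* The zero-divisor graph Z(alpha, beta).  Quadruples (h,h',g,g') are encoded
   as (((h, h'), g), g'). *)
Definition Zquads (a b : groupAlg G F) : {fset G * G * G * G} :=
  [fset q in (supp a `*` supp a) `*` supp b `*` supp b
     | (q.1.2 != q.2) && ((q.1.1.1 * q.1.2)%g == (q.1.1.2 * q.2)%g)].

Definition qswap (q : G * G * G * G) : G * G * G * G :=
  (q.1.1.2, q.1.1.1, q.2, q.1.2).

Definition Zedges (a b : groupAlg G F) : {fset {fset G * G * G * G}} :=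
  [fset [fset q; qswap q] | q in Zquads a b].

Definition endpoints (e : {fset G * G * G * G}) : {fset G} :=
  [fset q.1.2 | q in e].

Definition Z_mult (a b : groupAlg G F) (g g' : G) : nat :=
  #|` [fset e in Zedges a b | endpoints e == [fset g; g']] |.

Definition cayley_adj (S : {fset G}) (x y : G) : bool := (x * y^-1)%g \in S.

End Defs.

(* Main.v *)
Require Import Defs.
From HB Require Import structures.
From mathcomp Require Import all_boot all_algebra finmap.
From mathcomp Require Import monoid.
Local Open Scope fset_scope.
Set Implicit Arguments. Unset Strict Implicit.

Lemma S_inj (G : groupType) (F : fieldType) (a : groupAlg G F) :
  #|` supp a| = 4%N -> #|` S_of a| = 12%N ->
  forall h h' k k', h \in supp a -> h' \in supp a -> k \in supp a -> k' \in supp a ->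
  h != h' -> k != k' -> (h^-1 * h' = k^-1 * k')%g -> h = k /\ h' = k'.
Proof.
move=> cA cS.
set A := supp a.
set D := [fset p in A `*` A | p.1 != p.2].
pose f := fun p : G * G => (p.1^-1 * p.2)%g.
have SE : S_of a = f @` D.
  apply/fsetP => x; apply/imfset2P/imfsetP.
    case=> h hA [h' /= ]. rewrite !inE /=.
    move=> /andP[h'A hh'] ->.
    by exists (h, h'); rewrite // !inE /= hA h'A hh'.
  case=> [[h h']]; rewrite !inE /= => /andP[/andP[hA h'A] hh'] ->.
  exists h => //; exists h' => //; rewrite !inE /=. by rewrite h'A hh'.
  have cAA : (#|` A `*` A| <= 16)%N.
    have sub : A `*` A `<=` [fset x in [seq (x, y) | x <- enum_fset A, y <- enum_fset A]].
      apply/fsubsetP => u; rewrite in_fsetM => /andP[u1 u2].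
      rewrite in_fset; case: u u1 u2 => x y /= xA yA.
      by apply: allpairs_f.
    rewrite (leq_trans (fsubset_leq_card sub)) // card_fseq (leq_trans (size_undup _)) //.
    by rewrite size_allpairs -/(#|` A|) cA.
  pose dg := [fset (x, x) | x in A].
  have cdg : #|` dg| = 4%N.
    rewrite card_in_imfset /=; first exact: cA.
    by move=> x y _ _ [].
  have sdg : dg `<=` A `*` A.
    by apply/fsubsetP => u /imfsetP [x /= xA ->]; rewrite in_fsetM /= xA.
  have cD : (#|` D| <= 12)%N.
    have sub : D `<=` (A `*` A) `\` dg.
      apply/fsubsetP => -[x y]; rewrite !inE /= => /andP[/andP[xA yA] xy].
      rewrite xA yA !andbT; apply/negP => /imfsetP [z _ [ex ey]]; by rewrite ex ey eqxx in xy.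
    rewrite (leq_trans (fsubset_leq_card sub)) // cardfsDS // cdg.
    by rewrite leq_subLR (leq_trans cAA).
  have injf : {in D &, injective f}.
    apply/card_in_imfsetP; rewrite -SE cS eqn_leq cD /=.
    by rewrite -cS SE leq_imfset_card.
  move=> h h' k k' hA h'A kA k'A hh' kk' E.
  have := injf (h, h') (k, k').
  rewrite !inE /= hA h'A kA k'A hh' kk' => /(_ isT isT E) [-> ->]; done.
Qed.

Lemma eq_swap (G : groupType) (h h' g g' : G) :
  (h * g = h' * g')%g -> (h^-1 * h' = g * g'^-1)%g.
Proof.
move=> E; have -> : g = (h^-1 * (h' * g'))%g by rewrite -E mulKg.
by rewrite mulgA mulgK.
Qed.

Lemma eq_swap_neq (G : groupType) (h h' g g' : G) :
  (h * g = h' * g')%g -> g != g' -> h != h'.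
Proof.
move=> E; apply: contra => /eqP hh; rewrite hh in E.
by apply/eqP; apply: mulgI E.
Qed.

Lemma eq_swap_inv (G : groupType) (h h' g g' : G) :
  (h^-1 * h' = g * g'^-1)%g -> (h * g = h' * g')%g.
Proof.
move=> E; have -> : g = (h^-1 * h' * g')%g by rewrite E mulgVK.
by rewrite !mulgA mulgV mul1g.
Qed.

Lemma endpoints2 (G : groupType) (q : G * G * G * G) :
  endpoints [fset q; qswap q] = [fset q.1.2; q.2].
Proof.
apply/fsetP => x; apply/imfsetP/idP.
  by case=> y; rewrite !inE => /orP[]/eqP -> ->; rewrite eqxx ?orbT.
rewrite !inE => /orP[]/eqP ->.
  by exists q; rewrite // !inE eqxx.
by exists (qswap q); rewrite // !inE eqxx orbT.
Qed.

Lemma fset2_eq (T : choiceType) (x y g g' : T) :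
  x != y -> [fset x; y] = [fset g; g'] -> (x = g /\ y = g') \/ (x = g' /\ y = g).
Proof.
move=> xy E.
have xi : x \in [fset g; g'] by rewrite -E !inE eqxx.
have yi : y \in [fset g; g'] by rewrite -E !inE eqxx orbT.
have gi : g \in [fset x; y] by rewrite E !inE eqxx.
move: xi yi gi; rewrite !inE => /orP[]/eqP ex /orP[]/eqP ey /orP[]/eqP eg;
  subst; rewrite ?eqxx in xy; by [left|right|].
Qed.

Lemma memE (G : groupType) (F : fieldType) (a b : groupAlg G F) (g g' : G) e :
  e \in Zedges a b -> endpoints e == [fset g; g'] ->
  exists h h', [/\ h \in supp a, h' \in supp a, (h * g = h' * g')%g &
     e = [fset (h, h', g, g'); (h', h, g', g)]].
Proof.
move=> /imfsetP [q qZ ->] /eqP; rewrite endpoints2.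
move: qZ; rewrite !inE; case: q => [[[h h'] x] y] /=.
move=> /andP[/andP[/andP[/andP[hA h'A] xB] yB] /andP[xy /eqP E]].
case/(fset2_eq xy) => [[ex ey]|[ex ey]]; subst.
  by exists h, h'.
exists h', h; split => //.
apply/fsetP => z; rewrite !inE /qswap /=. by rewrite orbC.
Qed.

Unset Implicit Arguments. Set Strict Implicit.
Theorem mainTheorem10 (G : groupType) (F : fieldType)
    (alpha beta : groupAlg G F) :
  torsion_free G ->
  zero_divisor alpha ->
  #|` supp alpha| = 4%N ->
  #|` S_of alpha| = 12%N ->
  galg_nonzero beta ->
  galg_mul_zero alpha beta ->
  forall g g' : G, g \in supp beta -> g' \in supp beta -> g != g' ->
    Z_mult alpha beta g g' = (if cayley_adj (S_of alpha) g g' then 1%N else 0%N).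
Proof.
move=> _ _ cA cS _ _ g g' gB g'B gg'.
rewrite /Z_mult /cayley_adj.
have toS : forall e, e \in [fset e in Zedges alpha beta | endpoints e == [fset g; g']] ->
  exists h h', [/\ h \in supp alpha, h' \in supp alpha, h != h', (h^-1 * h' = g * g'^-1)%g &
     e = [fset (h, h', g, g'); (h', h, g', g)]].
  move=> e; rewrite !inE => /andP[eZ eE].
  have [h [h' [hA h'A E ->]]] := memE eZ eE.
  exists h, h'; split => //; [exact: eq_swap_neq E gg' | exact: eq_swap].
case: ifP => adj.
  have [h hA [h' ]] := imfset2P _ _ _ _ _ adj.
  rewrite !inE => /andP[h'A hh'] E.
  set e0 := [fset (h, h', g, g'); (h', h, g', g)].
  suff -> : [fset e in Zedges alpha beta | endpoints e == [fset g; g']] = [fset e0].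
    exact: cardfs1.
  apply/fsetP => e; apply/idP/idP.
    move=> /toS [k [k' [kA k'A kk' E' ->]]].
    have [-> ->] := S_inj cA cS kA k'A hA h'A kk' hh' (etrans E' E).
    by rewrite inE.
  rewrite inE => /eqP ->; rewrite !inE.
  have q0 : (h, h', g, g') \in Zquads alpha beta.
    by rewrite !inE /= hA h'A gB g'B gg' /= (eq_swap_inv (esym E)) eqxx.
  apply/andP; split.
    by apply/imfsetP; exists (h, h', g, g').
  by rewrite endpoints2.
apply/eqP; rewrite cardfs_eq0; apply/eqP/fsetP => e; rewrite [in RHS]inE.
apply/negbTE/negP => /toS [k [k' [kA k'A kk' E' _]]].
move/negbT: adj => /negP; apply; apply/imfset2P; exists k => //; exists k' => //.
by rewrite !inE k'A kk'.
Qed.
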